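(* Let $k$ be a field, $\Delta$ a finite connected quiver without oriented cycles, $X$ a finite length $k\Delta$-module and $M$ an endo-finite $k\Delta$-module. Then $$\langle\operatorname{\bold{dim}}X,\operatorname{\bold{Dim}}M\rangle=|{}_{E(M)}\operatorname{Hom}(X,M)|-|{}_{E(M)}\operatorname{Ext}^1(X,M)|,$$ where $|{}_{E(M)}V|$ denotes the length of $V$ as an $E(M)$-module.
   Context: Modules are representations $(M_i,M_\alpha)$ of $\Delta$ with vertex set $\Delta_0$, arrow set $\Delta_1$, arrows $\alpha\colon s(\alpha)\to t(\alpha)$. $E(M)=\operatorname{End}(M)^{\mathrm{op}}$, acting on $\operatorname{Hom}(X,M)$ and $\operatorname{Ext}^1(X,M)$ via $M$; $M$ is endo-finite if it has finite length as $E(M)$-module. $\operatorname{\bold{dim}}X\in\mathbb Z^{\Delta_0}$ has $i$-th entry the Jordan–Hölder multiplicity of the simple $S(i)$ in $X$ (i.e. $\dim_kX_i$), and $(\operatorname{\bold{Dim}}M)_i$ is the length of $M_i$ as an $E(M)$-module. The Euler form is $\langle x,y\rangle=\sum_{i\in\Delta_0}x_iy_i-\sum_{\alpha\in\Delta_1}x_{s(\alpha)}y_{t(\alpha)}$. *)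

(* Defs.v *)
From mathcomp Require Import all_boot all_order all_algebra.
Set Implicit Arguments. Unset Strict Implicit. Unset Printing Implicit Defensive.
Import GRing.Theory.
Local Open Scope ring_scope.

Definition quiver_connected (V A : finType) (s t : A -> V) : Prop :=
  forall i j : V,
    connect (fun x y : V =>
      [exists a : A, ((s a == x) && (t a == y)) || ((s a == y) && (t a == x))]) i j.

Definition quiver_acyclic (V A : finType) (s t : A -> V) : Prop :=
  forall p : seq A, p != [::] -> ~~ cycle (fun a b : A => t a == s b) p.

(* Bot <= Top are the bottom and top of the module, so that the length
   computed is the length of the subquotient Top/Bot (Bot = {z} for an
   honest submodule Top). *)

Definition sub_set (W : Type) (P Q : W -> Prop) := forall w, P w -> Q w.
Definition eq_set (W : Type) (P Q : W -> Prop) := forall w, P w <-> Q w.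

Definition submod (W : Type) (z : W) (add : W -> W -> W)
  (E : Type) (isE : E -> Prop) (act : E -> W -> W) (N : W -> Prop) : Prop :=
  N z /\ (forall u v, N u -> N v -> N (add u v)) /\
  (forall e, isE e -> forall u, N u -> N (act e u)).

Definition has_length (W : Type) (z : W) (add : W -> W -> W)
  (E : Type) (isE : E -> Prop) (act : E -> W -> W)
  (Bot Top : W -> Prop) (n : nat) : Prop :=
  exists N : nat -> W -> Prop,
    [/\ eq_set (N 0%N) Bot, eq_set (N n) Top,
        (forall j, (j <= n)%N -> submod z add isE act (N j)) &
        (forall j, (j < n)%N ->
           [/\ sub_set (N j) (N j.+1), ~ sub_set (N j.+1) (N j) &
               forall L, submod z add isE act L -> sub_set (N j) L ->
                 sub_set L (N j.+1) -> eq_set L (N j) \/ eq_set L (N j.+1)])].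

Section Reps.
Variables (k : fieldType) (V A : finType) (s t : A -> V).

Definition lin (U W : lmodType k) (f : U -> W) : Prop :=
  forall (c : k) (u v : U), f (c *: u + v) = c *: f u + f v.

Variables (M : V -> lmodType k) (mM : forall a : A, {linear M (s a) -> M (t a)}).

Definition endoT := forall i : V, M i -> M i.
Definition is_endo (e : endoT) : Prop :=
  (forall i, lin (e i)) /\
  (forall a (m : M (s a)), mM a (e (s a) m) = e (t a) (mM a m)).

Definition totT := forall i : V, M i.
Definition tot_zero : totT := fun i => 0.
Definition tot_add (m m' : totT) : totT := fun i => m i + m' i.
Definition tot_act (e : endoT) (m : totT) : totT := fun i => e i (m i).

Definition endofinite : Prop :=
  exists n, has_length tot_zero tot_add is_endo tot_act
              (fun m => m = tot_zero) (fun _ => True) n.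

Definition Dim_length (i : V) (n : nat) : Prop :=
  has_length (0 : M i) +%R is_endo (fun e (m : M i) => e i m)
             (fun m => m = 0) (fun _ => True) n.

(* X : finite-dimensional representation, X_i = k^(d i) (row vectors),
   X_a : v |-> v *m xA a *)
Variables (d : V -> nat) (xA : forall a : A, 'M[k]_(d (s a), d (t a))).

Definition homT := forall i : V, 'rV[k]_(d i) -> M i.
Definition hom_zero : homT := fun i v => 0.
Definition hom_add (f g : homT) : homT := fun i v => f i v + g i v.
Definition hom_act (e : endoT) (f : homT) : homT := fun i v => e i (f i v).
Definition is_hom (f : homT) : Prop :=
  (forall i, lin (f i)) /\
  (forall a (v : 'rV[k]_(d (s a))), mM a (f (s a) v) = f (t a) (v *m xA a)).

Definition hom_length (n : nat) : Prop :=
  has_length hom_zero hom_add is_endo hom_act (fun f => f = hom_zero) is_hom n.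

(* Ext^1(X, M) = cokernel of
   delta : (+)_i Hom_k(X_i, M_i) -> (+)_a Hom_k(X_(s a), M_(t a)),
   (f_i) |-> (M_a f_(s a) - f_(t a) X_a)_a,
   as an E(M)-module (E(M) acting by postcomposition); its length is the
   length of the interval [Im delta, whole space] of submodules. *)
Definition arrT := forall a : A, 'rV[k]_(d (s a)) -> M (t a).
Definition arr_zero : arrT := fun a v => 0.
Definition arr_add (g h : arrT) : arrT := fun a v => g a v + h a v.
Definition arr_act (e : endoT) (g : arrT) : arrT := fun a v => e (t a) (g a v).
Definition delta (f : homT) : arrT :=
  fun a v => mM a (f (s a) v) - f (t a) (v *m xA a).
Definition is_arr (g : arrT) : Prop := forall a, lin (g a).
Definition im_delta (g : arrT) : Prop :=
  exists f : homT, (forall i, lin (f i)) /\ g = delta f.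

Definition ext_length (n : nat) : Prop :=
  has_length arr_zero arr_add is_endo arr_act im_delta is_arr n.

End Reps.

Definition euler (V A : finType) (s t : A -> V) (x y : V -> nat) : int :=
  \sum_(i : V) ((x i * y i)%N)%:Z - \sum_(a : A) ((x (s a) * y (t a))%N)%:Z.

(* Main.v *)
Require Import Defs.
From mathcomp Require Import all_boot all_order all_algebra.
From mathcomp Require Import ring.
From Stdlib Require Import FunctionalExtensionality Classical PropExtensionality ClassicalEpsilon.
Set Implicit Arguments. Unset Strict Implicit. Unset Printing Implicit Defensive.
Import GRing.Theory.
Local Open Scope ring_scope.

Lemma eq_set_refl (W : Type) (P : W -> Prop) : eq_set P P.
Proof. by []. Qed.
Lemma eq_set_sym (W : Type) (P Q : W -> Prop) : eq_set P Q -> eq_set Q P.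
Proof. by move=> H w; split=> /H. Qed.
Lemma eq_set_trans (W : Type) (P Q R : W -> Prop) : eq_set P Q -> eq_set Q R -> eq_set P R.
Proof. by move=> H1 H2 w; split=> [/H1/H2|/H2/H1]. Qed.
Lemma eq_sub (W : Type) (P Q : W -> Prop) : eq_set P Q -> sub_set P Q.
Proof. by move=> H w /H. Qed.
Lemma eq_subr (W : Type) (P Q : W -> Prop) : eq_set P Q -> sub_set Q P.
Proof. by move=> H w /H. Qed.
Lemma sub_trans (W : Type) (P Q R : W -> Prop) : sub_set P Q -> sub_set Q R -> sub_set P R.
Proof. by move=> H1 H2 w /H1/H2. Qed.
Lemma sub_antisym (W : Type) (P Q : W -> Prop) : sub_set P Q -> sub_set Q P -> eq_set P Q.
Proof. by move=> H1 H2 w; split=> [/H1|/H2]. Qed.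

Section Basic.
Variables (W : Type) (z : W) (add : W -> W -> W)
  (E : Type) (isE : E -> Prop) (act : E -> W -> W).
Local Notation sm := (submod z add isE act).
Local Notation HL := (has_length z add isE act).

Definition simple (K T : W -> Prop) :=
  [/\ sm K, sm T, sub_set K T, ~ sub_set T K &
      forall L, sm L -> sub_set K L -> sub_set L T -> eq_set L K \/ eq_set L T].

Lemma sm_eq L K : eq_set L K -> sm L -> sm K.
Proof.
move=> H [H0 [H1 H2]]; split; first exact/H.
split; first by move=> u v /H Hu /H Hv; apply/H; apply: H1.
by move=> e He u /H Hu; apply/H; apply: H2.
Qed.

Lemma simple_eq K K' T T' : eq_set K K' -> eq_set T T' -> simple K T -> simple K' T'.
Proof.
move=> HK HT [s1 s2 s3 s4 s5]; split.
- exact: sm_eq s1.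
- exact: sm_eq s2.
- by move=> w /HK /s3 /HT.
- by move=> H; apply: s4 => w /HT /H /HK.
move=> L sL H1 H2.
have [E1|E2] := s5 L sL (sub_trans (eq_sub HK) H1) (sub_trans H2 (eq_subr HT)).
  by left; apply: eq_set_trans E1 HK.
by right; apply: eq_set_trans E2 HT.
Qed.

Lemma chain_mono (N : nat -> W -> Prop) n :
  (forall j, (j < n)%N -> sub_set (N j) (N j.+1)) ->
  forall i j, (i <= j <= n)%N -> sub_set (N i) (N j).
Proof.
move=> H i j /andP[H1 H2]; move: H1 H2; elim: j => [|j IH].
  by rewrite leqn0 => /eqP -> _.
move=> H1 Hj; move: H1; rewrite leq_eqVlt => /orP[/eqP -> //|].
rewrite ltnS => Hij.
apply: sub_trans (IH Hij (ltnW Hj)) (H _ Hj).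
Qed.

Lemma HL_props B T n : HL B T n -> [/\ sm B, sm T & sub_set B T].
Proof.
case=> N [HB HT Hs Hst].
have Hm := chain_mono (fun j Hj => let: And3 a _ _ := Hst j Hj in a).
split.
- by apply: sm_eq (Hs 0%N isT).
- by apply: sm_eq (Hs n (leqnn n)).
by move=> w /HB /(Hm 0%N n (leqnn n)) /HT.
Qed.

Lemma HL_chain_in B T n N :
  [/\ eq_set (N 0%N) B, eq_set (N n) T,
        (forall j, (j <= n)%N -> sm (N j)) &
        (forall j, (j < n)%N ->
           [/\ sub_set (N j) (N j.+1), ~ sub_set (N j.+1) (N j) &
               forall L, sm L -> sub_set (N j) L ->
                 sub_set L (N j.+1) -> eq_set L (N j) \/ eq_set L (N j.+1)])] ->
  forall j, (j <= n)%N -> sub_set B (N j) /\ sub_set (N j) T.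
Proof.
case=> HB HT Hs Hst j Hj.
have Hm := chain_mono (fun j Hj => let: And3 a _ _ := Hst j Hj in a).
split; first by move=> w /HB; apply: Hm.
by move=> w /(Hm j n); rewrite Hj leqnn => /(_ isT) /HT.
Qed.

Lemma HL_eq B B' T T' n : eq_set B B' -> eq_set T T' -> HL B T n -> HL B' T' n.
Proof.
move=> H1 H2 [N [HB HT Hs Hst]]; exists N; split => //.
  exact: eq_set_trans HB H1.
exact: eq_set_trans HT H2.
Qed.

Lemma HL0 B : sm B -> HL B B 0.
Proof. by move=> sB; exists (fun _ => B); split. Qed.

Lemma HL0_inv B T : HL B T 0 -> eq_set B T.
Proof. by case=> N [HB HT _ _]; apply: eq_set_trans (eq_set_sym HB) HT. Qed.

Lemma HL_step_simple B T n : HL B T n.+1 ->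
  exists T', HL B T' n /\ simple T' T.
Proof.
case=> N [HB HT Hs Hst]; exists (N n); split.
  exists N; split => // j Hj; [exact: Hs (leqW Hj)|exact: Hst (leqW Hj)].
have [a b c] := Hst n (leqnn _).
apply: simple_eq (eq_set_refl _) HT _; split => //; [exact: Hs (leqnSn _)| exact: Hs].
Qed.

Lemma HL_snoc B K T n : HL B K n -> simple K T -> HL B T n.+1.
Proof.
case=> N [HB HK Hs Hst] [s1 s2 s3 s4 s5].
exists (fun j => if (j <= n)%N then N j else T); split => //=.
- by rewrite ltnn.
- by move=> j Hj; case: ifP => // /Hs.
move=> j Hj; rewrite ltnS in Hj; rewrite Hj.
case: ifP => Hj1; first exact: Hst.
have Ejn : j = n by apply/eqP; rewrite eqn_leq Hj leqNgt; move/negbT: Hj1; rewrite -ltnNge ltnS.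
subst j.
have [a b c d e] := simple_eq (eq_set_sym HK) (eq_set_refl _) (And5 s1 s2 s3 s4 s5).
by split.
Qed.

Lemma HL1 K T : simple K T -> HL K T 1.
Proof.
move=> Hs; have [s1 _ _ _ _] := Hs; exact: HL_snoc (HL0 s1) Hs.
Qed.

Lemma HL1_inv K T : HL K T 1 -> simple K T.
Proof.
move/HL_step_simple=> [T' [H0 Hs]]; have H := HL0_inv H0.
exact: simple_eq (eq_set_sym H) (eq_set_refl _) Hs.
Qed.

Lemma HL_cat B K T n m : HL B K n -> HL K T m -> HL B T (n + m).
Proof.
move=> HBK; elim: m T => [|m IH] T.
  by move=> H0; have H := HL0_inv H0; rewrite addn0; apply: HL_eq HBK.
move/HL_step_simple=> [T' [H1 H2]]; rewrite addnS; apply: HL_snoc H2.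
exact: IH.
Qed.

End Basic.


Section Iso.
Variables (W1 : Type) (z1 : W1) (add1 : W1 -> W1 -> W1)
  (E1 : Type) (isE1 : E1 -> Prop) (act1 : E1 -> W1 -> W1).
Variables (W2 : Type) (z2 : W2) (add2 : W2 -> W2 -> W2)
  (E2 : Type) (isE2 : E2 -> Prop) (act2 : E2 -> W2 -> W2).
Local Notation sm1 := (submod z1 add1 isE1 act1).
Local Notation hl1 := (has_length z1 add1 isE1 act1).
Local Notation sm2 := (submod z2 add2 isE2 act2).
Local Notation hl2 := (has_length z2 add2 isE2 act2).

Lemma HL_iso B T B' T' (F : (W1 -> Prop) -> W2 -> Prop) (G : (W2 -> Prop) -> W1 -> Prop) n :
  (forall L1 L2, sub_set L1 L2 -> sub_set (F L1) (F L2)) ->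
  (forall L1 L2, sub_set L1 L2 -> sub_set (G L1) (G L2)) ->
  (forall L, sm1 L -> sub_set B L -> sub_set L T -> sm2 (F L) /\ eq_set (G (F L)) L) ->
  (forall L, sm2 L -> sub_set B' L -> sub_set L T' -> sm1 (G L) /\ eq_set (F (G L)) L) ->
  eq_set (F B) B' -> eq_set (F T) T' ->
  hl1 B T n -> hl2 B' T' n.
Proof.
move=> mF mG c1 c2 FB FT [N HN].
have Hin := HL_chain_in HN.
case: HN => [HB HT Hs Hst].
have Fe L1 L2 : eq_set L1 L2 -> eq_set (F L1) (F L2).
  by move=> H; apply: sub_antisym; apply: mF; [apply: eq_sub|apply: eq_subr].
have Ge L1 L2 : eq_set L1 L2 -> eq_set (G L1) (G L2).
  by move=> H; apply: sub_antisym; apply: mG; [apply: eq_sub|apply: eq_subr].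
exists (fun j => F (N j)); split.
- exact: eq_set_trans (Fe _ _ HB) FB.
- exact: eq_set_trans (Fe _ _ HT) FT.
- by move=> j Hj; have [H1 H2] := Hin j Hj; case: (c1 _ (Hs j Hj) H1 H2).
move=> j Hj.
have Hj' := ltnW Hj.
have [Hi1 Hi2] := Hin j Hj'; have [Hi3 Hi4] := Hin j.+1 Hj.
have [_ GF1] := c1 _ (Hs j Hj') Hi1 Hi2.
have [_ GF2] := c1 _ (Hs j.+1 Hj) Hi3 Hi4.
have [a b c] := Hst j Hj.
split.
- exact: mF.
- move=> H; apply: b.
  apply: sub_trans (eq_subr GF2) _; apply: sub_trans _ (eq_sub GF1).
  exact: mG.
move=> L sL H1 H2.
have LB : sub_set B' L.
  apply: sub_trans (eq_subr FB) _; apply: sub_trans _ H1; exact: mF.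
have LT : sub_set L T'.
  apply: sub_trans H2 _; apply: sub_trans _ (eq_sub FT); exact: mF.
have [sG FG] := c2 _ sL LB LT.
have HH : eq_set (G L) (N j) \/ eq_set (G L) (N j.+1).
  apply: c sG _ _.
  - apply: sub_trans (eq_subr GF1) _; exact: mG.
  - apply: sub_trans _ (eq_sub GF2); exact: mG.
case: HH => [Q1|Q2].
- by left; apply: eq_set_trans (eq_set_sym FG) (Fe _ _ Q1).
- by right; apply: eq_set_trans (eq_set_sym FG) (Fe _ _ Q2).
Qed.

End Iso.

Section Iso2.
Variables (W1 : Type) (z1 : W1) (add1 : W1 -> W1 -> W1)
  (E1 : Type) (isE1 : E1 -> Prop) (act1 : E1 -> W1 -> W1).
Variables (W2 : Type) (z2 : W2) (add2 : W2 -> W2 -> W2)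
  (E2 : Type) (isE2 : E2 -> Prop) (act2 : E2 -> W2 -> W2).
Local Notation sm1 := (submod z1 add1 isE1 act1).
Local Notation hl1 := (has_length z1 add1 isE1 act1).
Local Notation sm2 := (submod z2 add2 isE2 act2).
Local Notation hl2 := (has_length z2 add2 isE2 act2).

Lemma HL_iso_iff B T B' T' (F : (W1 -> Prop) -> W2 -> Prop) (G : (W2 -> Prop) -> W1 -> Prop) n :
  sm1 B -> sm1 T -> sub_set B T ->
  (forall L1 L2, sub_set L1 L2 -> sub_set (F L1) (F L2)) ->
  (forall L1 L2, sub_set L1 L2 -> sub_set (G L1) (G L2)) ->
  (forall L, sm1 L -> sub_set B L -> sub_set L T -> sm2 (F L) /\ eq_set (G (F L)) L) ->
  (forall L, sm2 L -> sub_set B' L -> sub_set L T' -> sm1 (G L) /\ eq_set (F (G L)) L) ->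
  eq_set (F B) B' -> eq_set (F T) T' ->
  hl1 B T n <-> hl2 B' T' n.
Proof.
move=> sB sT BT mF mG c1 c2 FB FT; split; first by move=> H; exact: (HL_iso mF mG c1 c2 FB FT H).
have Ge L1 L2 : eq_set L1 L2 -> eq_set (G L1) (G L2).
  by move=> H; apply: sub_antisym; apply: mG; [apply: eq_sub|apply: eq_subr].
apply: (@HL_iso _ _ _ _ _ _ _ _ _ _ _ _ B' T' B T G F) => //.
- apply: eq_set_trans (Ge _ _ (eq_set_sym FB)) _.
  exact: (c1 B sB (fun w h => h) BT).2.
- apply: eq_set_trans (Ge _ _ (eq_set_sym FT)) _.
  exact: (c1 T sT BT (fun w h => h)).2.
Qed.

End Iso2.


Record grp (W : Type) (z : W) (add : W -> W -> W) (opp : W -> W)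
  (E : Type) (isE : E -> Prop) (act : E -> W -> W) : Prop := Grp {
  gA : forall u v w, add u (add v w) = add (add u v) w;
  gC : forall u v, add u v = add v u;
  g0 : forall u, add z u = u;
  gN : forall u, add u (opp u) = z;
  gD : forall e, isE e -> forall u v, act e (add u v) = add (act e u) (act e v);
  gE : exists2 en, isE en & forall u, act en u = opp u }.

Section Gen.
Variables (W : Type) (z : W) (add : W -> W -> W) (opp : W -> W)
  (E : Type) (isE : E -> Prop) (act : E -> W -> W).
Hypothesis Hg : grp z add opp isE act.
Local Notation sm := (submod z add isE act).
Local Notation HL := (has_length z add isE act).

Definition meet (P Q : W -> Prop) w := P w /\ Q w.
Definition plus (P Q : W -> Prop) w := exists u v, [/\ P u, Q v & w = add u v].

Lemma gaddK u v : add (add u v) (opp v) = u.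
Proof. by case: Hg => A C Z N _ _; rewrite -A N C Z. Qed.
Lemma gaddNK u v : add (add u (opp v)) v = u.
Proof. by case: Hg => A C Z N _ _; rewrite -A (C _ v) N C Z. Qed.
Lemma gadd0r u : add u z = u.
Proof. by case: Hg => A C Z N _ _; rewrite C Z. Qed.

Lemma sm_opp L u : sm L -> L u -> L (opp u).
Proof. case: Hg => _ _ _ _ _ [en Hen Hact] [_ [_ H]] Lu. rewrite -Hact; exact: H. Qed.

Lemma sm_meet L K : sm L -> sm K -> sm (meet L K).
Proof.
move=> [a1 [b1 c1]] [a2 [b2 c2]]; split; first by [].
split; first by move=> u v [? ?] [? ?]; split; [apply: b1|apply: b2].
by move=> e He u [? ?]; split; [apply: c1|apply: c2].
Qed.

Lemma sm_plus L K : sm L -> sm K -> sm (plus L K).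
Proof.
case: Hg => A C Z N D _.
move=> [a1 [b1 c1]] [a2 [b2 c2]]; split; first by exists z, z; split; rewrite ?Z.
split.
  move=> u v [u1 [u2 [Hu1 Hu2 ->]]] [v1 [v2 [Hv1 Hv2 ->]]].
  exists (add u1 v1), (add u2 v2); split; [exact: b1|exact: b2|].
  by rewrite -!A; congr add; rewrite !A (C u2).
move=> e He u [u1 [u2 [Hu1 Hu2 ->]]]; exists (act e u1), (act e u2).
by split; [exact: c1|exact: c2|exact: D].
Qed.

Lemma sub_plusl L K : sm K -> sub_set L (plus L K).
Proof. by move=> [a _] w Lw; exists w, z; split; rewrite ?gadd0r. Qed.
Lemma sub_plusr L K : sm L -> sub_set K (plus L K).
Proof. by case: Hg => _ _ Z _ _ _ [a _] w Kw; exists z, w; split; rewrite ?Z. Qed.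
Lemma plus_sub L K X : sm X -> sub_set L X -> sub_set K X -> sub_set (plus L K) X.
Proof. by move=> [_ [b _]] H1 H2 w [u [v [Lu Kv ->]]]; apply: b; [apply: H1|apply: H2]. Qed.
Lemma plusC_sub L K : sub_set (plus L K) (plus K L).
Proof. by case: Hg => _ C _ _ _ _ w [u [v [Lu Kv ->]]]; exists v, u; split => //; exact: C. Qed.
Lemma plus_mono L K L' K' : sub_set L L' -> sub_set K K' -> sub_set (plus L K) (plus L' K').
Proof. by move=> H1 H2 w [u [v [Lu Kv ->]]]; exists u, v; split; [apply: H1|apply: H2|]. Qed.

Lemma modular L N K : sm L -> sub_set K L ->
  sub_set (meet L (plus N K)) (plus (meet L N) K).
Proof.
move=> sL KL w [Lw [n [k [Nn Kk Eq]]]].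
exists n, k; split => //; split => //.
have -> : n = add w (opp k) by rewrite Eq gaddK.
case: (sL) => _ [b _]; apply: b => //; apply: (sm_opp sL); exact: KL.
Qed.

Lemma diamond A C n : sm A -> sm C ->
  HL (meet A C) A n <-> HL C (plus A C) n.
Proof.
move=> sA sC.
have sAC := sm_meet sA sC.
apply: (@HL_iso_iff _ _ _ _ _ _ _ _ _ _ _ _ _ _ _ _ (fun X => plus X C) (fun Y => meet Y A)) => //.
- by move=> w [].
- by move=> L1 L2 H; apply: plus_mono.
- by move=> L1 L2 H w [? ?]; split => //; apply: H.
- move=> L sL BL LA; split; first exact: sm_plus.
  apply: sub_antisym.
  + move=> w [[l [c [Ll Cc Eq]]] Aw].
    have Ac : A c.
      have -> : c = add w (opp l) by rewrite Eq (gC Hg l) gaddK.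
      case: (sA) => _ [b _]; apply: b => //; apply: sm_opp => //; exact: LA.
    have Lc : L c by apply: BL.
    by rewrite Eq; case: sL => _ [b _]; apply: b.
  + by move=> w Lw; split; [apply: sub_plusl|apply: LA].
- move=> Y sY CY YAC; split; first exact: sm_meet.
  apply: sub_antisym.
  + by apply: plus_sub => //; move=> w [].
  + move=> y Yy; have [a [c [Aa Cc Eq]]] := YAC y Yy.
    exists a, c; split => //; split => //.
    have -> : a = add y (opp c) by rewrite Eq gaddK.
    case: (sY) => _ [b _]; apply: b => //; apply: sm_opp => //; exact: CY.
- apply: sub_antisym; first by apply: plus_sub => // w [].
  apply: sub_plusr; exact: sAC.
Qed.

Lemma simple_between T' T X : simple z add isE act T' T -> sm X ->
  sub_set T' X -> sub_set X T -> eq_set X T' \/ eq_set X T.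
Proof. by case=> _ _ _ _ H; apply: H. Qed.

Lemma HL_lower B T n : HL B T n -> forall L, sm L -> sub_set B L -> sub_set L T ->
  exists m, HL B L m.
Proof.
elim: n T => [|n IH] T.
  move=> H0 L sL BL LT; exists 0%N; have H := HL0_inv H0.
  have [sB0 _ _] := HL_props H0.
  apply: HL_eq (eq_set_refl _) _ (HL0 sB0).
  by apply: sub_antisym => // w /LT /H.
move=> HS L sL BL LT; have [T' [HT' sT']] := HL_step_simple HS.
have [sB sT'0 BT'] := HL_props HT'.
have [m Hm] := IH _ HT' (meet L T') (sm_meet sL sT'0)
   (fun w Bw => conj (BL w Bw) (BT' w Bw)) (fun w h => proj2 h).
case: (classic (sub_set L T')) => [LT'|nLT'].
  exists m; apply: HL_eq (eq_set_refl _) _ Hm.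
  by apply: sub_antisym => [w []|w Lw] //; split => //; apply: LT'.
exists m.+1; apply: HL_snoc Hm _.
split => //.
- exact: sm_meet.
- by move=> w [].
- by move=> H; apply: nLT' => w /H [].
move=> X sX H1 H2.
have [sT'1 sT1 T'T0 _ _] := sT'.
have := simple_between sT' (sm_plus sT'1 sX) (sub_plusl (L:=T') sX) (plus_sub sT1 T'T0 (sub_trans H2 LT)).
case=> [E1|E2].
- left; apply: sub_antisym => // w Xw; split; first exact: H2.
  by apply: (eq_sub E1); apply: sub_plusr.
- right; apply: sub_antisym => // w Lw.
  have := modular (N := T') sL H2 (conj Lw (eq_subr E2 (LT w Lw))).
  move=> [u [v [[Lu Tu] Xv ->]]].
  case: sX => _ [b _]; apply: b => //; apply: H1; by split.
Qed.

Lemma HL_upper B T n : HL B T n -> forall L, sm L -> sub_set B L -> sub_set L T ->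
  exists m, HL L T m.
Proof.
elim: n T => [|n IH] T.
  move=> H0 L sL BL LT; exists 0%N; have H := HL0_inv H0.
  have [_ sT0 _] := HL_props H0.
  apply: HL_eq _ (eq_set_refl _) (HL0 sT0).
  apply: sub_antisym => // w Tw; apply: BL; exact: (eq_subr H).
move=> HS L sL BL LT; have [T' [HT' sT']] := HL_step_simple HS.
have [sB sT'0 BT'] := HL_props HT'.
have [m Hm] := IH _ HT' (meet L T') (sm_meet sL sT'0)
   (fun w Bw => conj (BL w Bw) (BT' w Bw)) (fun w h => proj2 h).
have [sT'1 sT1 T'T nTT' _] := sT'.
case: (classic (sub_set L T')) => [LT'|nLT'].
  exists m.+1; apply: HL_snoc _ sT'.
  apply: HL_eq _ (eq_set_refl _) Hm.
  by apply: sub_antisym => [w []|w Lw] //; split => //; apply: LT'.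
have Hm' : HL (meet T' L) T' m.
  apply: HL_eq _ (eq_set_refl _) Hm.
  by apply: sub_antisym => w [].
have := (diamond m sT'0 sL).1 Hm'.
have := simple_between sT' (sm_plus sT'1 sL) (sub_plusl (L:=T') sL) (plus_sub sT1 T'T LT).
case=> [E1|E2].
- by exfalso; apply: nLT' => w Lw; apply: (eq_sub E1); apply: sub_plusr.
- move=> H; exists m; exact: HL_eq (eq_set_refl _) E2 H.
Qed.

Lemma HL0_uniq B T m : HL B T 0 -> HL B T m -> m = 0%N.
Proof.
move=> H0; have H := HL0_inv H0.
case: m => // m [N [HB HT Hs Hst]].
have Hm := chain_mono (fun j Hj => let: And3 a _ _ := Hst j Hj in a).
have [_ b _] := Hst 0%N isT.
exfalso; apply: b => w Hw.
have Hw1 : N m.+1 w by apply: (Hm 1%N m.+1) => //; rewrite leqnn.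
apply: (eq_subr HB); apply: (eq_subr H); exact: (eq_sub HT).
Qed.

Lemma JH_aux N0 : forall n, (n <= N0)%N -> forall B T m, HL B T n -> HL B T m -> n = m.
Proof.
elim: N0 => [|N0 IH] n Hn B T m Hn1 Hm1.
  move: Hn; rewrite leqn0 => /eqP En; subst n.
  by rewrite (HL0_uniq Hn1 Hm1).
case: n Hn Hn1 => [|n] Hn Hn1; first by rewrite (HL0_uniq Hn1 Hm1).
case: m Hm1 => [|m] Hm1; first by rewrite (HL0_uniq Hm1 Hn1).
have [T' [H1 s1]] := HL_step_simple Hn1.
have [T'' [H2 s2]] := HL_step_simple Hm1.
rewrite ltnS in Hn.
have [sT' sT T'T nTT' _] := s1.
have [sT'' _ T''T nTT'' _] := s2.
have [sB _ BT'] := HL_props H1.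
have [_ _ BT''] := HL_props H2.
case: (classic (sub_set T'' T')) => [Hsub|Hnsub].
  case: (simple_between s2 sT' Hsub T'T) => [E1|E2].
    congr S; apply: IH Hn _ _ _ H1 _.
    exact: HL_eq (eq_set_refl _) (eq_set_sym E1) H2.
  by exfalso; apply: nTT'; apply: eq_subr E2.
have EP : eq_set (plus T' T'') T.
  case: (simple_between s1 (sm_plus sT' sT'') (sub_plusl (L:=T') sT'') (plus_sub sT T'T T''T)) => // E1.
  by exfalso; apply: Hnsub => w Hw; apply: (eq_sub E1); apply: sub_plusr.
have EP' : eq_set (plus T'' T') T.
  apply: sub_antisym => w Hw.
    by apply: (eq_sub EP); apply: plusC_sub.
  by apply: plusC_sub; apply: (eq_subr EP).
have [r Hr] := HL_lower H1 (sm_meet sT' sT'') (fun w Bw => conj (BT' w Bw) (BT'' w Bw)) (fun w h => proj1 h).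
have K1 : HL (meet T' T'') T' 1.
  apply/(diamond 1 sT' sT''); apply: HL_eq (eq_set_refl _) (eq_set_sym EP) (HL1 s2).
have K2 : HL (meet T'' T') T'' 1.
  apply/(diamond 1 sT'' sT'); apply: HL_eq (eq_set_refl _) (eq_set_sym EP') (HL1 s1).
have Hr' : HL B (meet T'' T') r.
  by apply: HL_eq (eq_set_refl _) _ Hr; apply: sub_antisym => w [].
have E1 : n = (r + 1)%N by apply: IH Hn _ _ _ H1 (HL_cat Hr K1).
have E2 : (r + 1)%N = m.
  by apply: IH _ _ _ _ (HL_cat Hr' K2) H2; rewrite -E1.
by rewrite E1 E2.
Qed.

Lemma JH B T n m : HL B T n -> HL B T m -> n = m.
Proof. exact: (@JH_aux n n (leqnn n)). Qed.

End Gen.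


Section Transfer.
Variables (E : Type) (isE : E -> Prop)
 (W1 : Type) (z1 : W1) (add1 : W1 -> W1 -> W1) (opp1 : W1 -> W1) (act1 : E -> W1 -> W1)
 (W2 : Type) (z2 : W2) (add2 : W2 -> W2 -> W2) (act2 : E -> W2 -> W2).
Hypothesis Hg1 : grp z1 add1 opp1 isE act1.
Local Notation sm1 := (submod z1 add1 isE act1).
Local Notation hl1 := (has_length z1 add1 isE act1).
Local Notation sm2 := (submod z2 add2 isE act2).
Local Notation hl2 := (has_length z2 add2 isE act2).

Lemma HL_transfer (phi : W1 -> W2) B T B' T' n :
 phi z1 = z2 -> (forall u v, phi (add1 u v) = add2 (phi u) (phi v)) ->
 (forall e, isE e -> forall w, phi (act1 e w) = act2 e (phi w)) ->
 sm1 B -> sm1 T -> sub_set B T -> sm2 B' -> sm2 T' -> sub_set B' T' ->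
 (forall w, T w -> T' (phi w)) -> (forall w', T' w' -> exists2 w, T w & phi w = w') ->
 (forall w, T w -> B' (phi w) -> B w) -> (forall w, B w -> B' (phi w)) ->
 hl1 B T n <-> hl2 B' T' n.
Proof.
move=> p0 pD pE sB sT BT sB' sT' BT' img surj kerB imgB.
apply: (@HL_iso_iff _ _ _ _ _ _ _ _ _ _ _ _ B T B' T'
   (fun L w' => exists2 w, L w & phi w = w') (fun L' w => T w /\ L' (phi w))) => //.
- by move=> L1 L2 H w' [w /H Lw <-]; exists w.
- by move=> L1 L2 H w [Tw /H Lw].
- move=> L sL BL LT; split.
  + case: (sL) => L0 [LD LE]; split; first by exists z1.
    split.
      by move=> _ _ [u Lu <-] [v Lv <-]; exists (add1 u v); [apply: LD|].
    by move=> e He _ [u Lu <-]; exists (act1 e u); [apply: LE|apply: pE].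
  + apply: sub_antisym; last by move=> w Lw; split; [apply: LT|exists w].
    move=> w [Tw [l Ll Eq]].
    have Tl : T l by apply: LT.
    have Tw' : T (add1 w (opp1 l)).
      by case: (sT) => _ [b _]; apply: b => //; apply: (sm_opp Hg1 sT).
    have Bw' : B (add1 w (opp1 l)).
      apply: kerB => //; rewrite pD -Eq -pD (gN Hg1) p0; by case: sB'.
    have -> : w = add1 (add1 w (opp1 l)) l by rewrite (gaddNK Hg1).
    case: (sL) => _ [b _]; apply: b => //; exact: BL.
- move=> L' sL' BL' LT'; split.
  + case: (sL') => L0 [LD LE]; case: (sT) => T0 [TD TE]; split; first by split; rewrite ?p0.
    split.
      by move=> u v [Tu Lu] [Tv Lv]; split; [apply: TD|rewrite pD; apply: LD].
    by move=> e He u [Tu Lu]; split; [apply: TE|rewrite pE //; apply: LE].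
  + apply: sub_antisym; first by move=> w' [w [_ Lw] <-].
    move=> w' Lw'; have [w Tw Eq] := surj w' (LT' w' Lw').
    by exists w => //; split => //; rewrite Eq.
- apply: sub_antisym; first by move=> w' [w Bw <-]; apply: imgB.
  move=> w' Bw'; have [w Tw Eq] := surj w' (BT' w' Bw').
  by exists w => //; apply: kerB => //; rewrite Eq.
- apply: sub_antisym; first by move=> w' [w Tw <-]; apply: img.
  by move=> w' Tw'; have [w Tw Eq] := surj w' Tw'; exists w.
Qed.

End Transfer.


Section Lin.
Variables (k : fieldType) (U W : lmodType k) (f : U -> W).
Hypothesis Hf : lin f.
Lemma lin_add u v : f (u + v) = f u + f v.
Proof. by have := Hf 1 u v; rewrite !scale1r. Qed.
Lemma lin0 : f 0 = 0.
Proof. by have := Hf (-1) 0 0; rewrite scaler0 addr0 scaleN1r addNr. Qed.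
Lemma lin_scale c u : f (c *: u) = c *: f u.
Proof. by have := Hf c u 0; rewrite !addr0 lin0 addr0. Qed.
Lemma lin_opp u : f (- u) = - f u.
Proof. by rewrite -scaleN1r lin_scale scaleN1r. Qed.
Lemma lin_sub u v : f (u - v) = f u - f v.
Proof. by rewrite lin_add lin_opp. Qed.
Lemma lin_sum (I : Type) (r : seq I) (F : I -> U) :
  f (\sum_(i <- r) F i) = \sum_(i <- r) f (F i).
Proof. exact: (big_morph f lin_add lin0). Qed.
End Lin.

Lemma lin_zero (k : fieldType) (U W : lmodType k) : lin (fun _ : U => (0 : W)).
Proof. by move=> c u v; rewrite scaler0 addr0. Qed.
Lemma lin_addf (k : fieldType) (U W : lmodType k) (f g : U -> W) :
  lin f -> lin g -> lin (fun u => f u + g u).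
Proof.
move=> Hf Hg c u v; rewrite Hf Hg scalerDr.
by rewrite -!addrA; congr (_ + _); rewrite addrCA.
Qed.
Lemma lin_comp (k : fieldType) (U W Y : lmodType k) (f : U -> W) (g : W -> Y) :
  lin f -> lin g -> lin (fun u => g (f u)).
Proof. by move=> Hf Hg c u v; rewrite Hf Hg. Qed.
Lemma lin_oppf (k : fieldType) (U W : lmodType k) (f : U -> W) :
  lin f -> lin (fun u => - f u).
Proof. by move=> Hf c u v; rewrite Hf opprD scalerN. Qed.
Lemma lin_linear (k : fieldType) (U W : lmodType k) (f : {linear U -> W}) : lin f.
Proof. by move=> c u v; rewrite linearD linearZ. Qed.

Section Conc.
Variables (k : fieldType) (V A : finType) (s t : A -> V) (M : V -> lmodType k)
  (mM : forall a : A, {linear M (s a) -> M (t a)}).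
Local Notation isE := (is_endo mM).

Lemma endo_neg : isE (fun i (m : M i) => - m).
Proof. by split=> [i|a m]; [apply: lin_oppf|rewrite linearN]. Qed.

Section CT.
Variables (C : finType) (tau : C -> V).
Definition CT := forall c : C, M (tau c).
Definition ct_zero : CT := fun c => 0.
Definition ct_add (u v : CT) : CT := fun c => u c + v c.
Definition ct_opp (u : CT) : CT := fun c => - u c.
Definition ct_act (e : endoT M) (u : CT) : CT := fun c => e (tau c) (u c).

Lemma grp_CT : grp ct_zero ct_add ct_opp isE ct_act.
Proof.
split.
- by move=> u v w; apply: functional_extensionality_dep => c; rewrite /ct_add addrA.
- by move=> u v; apply: functional_extensionality_dep => c; rewrite /ct_add addrC.
- by move=> u; apply: functional_extensionality_dep => c; rewrite /ct_add /ct_zero add0r.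
- by move=> u; apply: functional_extensionality_dep => c; rewrite /ct_add /ct_opp subrr.
- move=> e [He _] u v; apply: functional_extensionality_dep => c.
  by rewrite /ct_act /ct_add lin_add.
- by exists (fun i (m : M i) => - m); first exact: endo_neg.
Qed.

Definition single (c0 : C) (m : M (tau c0)) : CT := fun c =>
  match c0 =P c with ReflectT e => eq_rect c0 (fun c => M (tau c)) m c e | ReflectF _ => 0 end.
Lemma single_id c0 m : single (c0:=c0) m c0 = m.
Proof.
rewrite /single; case: eqP => // e.
by rewrite (eq_irrelevance e (erefl c0)).
Qed.
Lemma single_ne c0 m c : c0 != c -> single (c0:=c0) m c = 0.
Proof. by rewrite /single; case: eqP. Qed.

Definition Ns (r : seq C) (w : CT) := forall c, c \notin r -> w c = 0.

Lemma sm_Ns r : submod ct_zero ct_add isE ct_act (Ns r).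
Proof.
split; first by [].
split; first by move=> u v Hu Hv c Hc; rewrite /ct_add Hu // Hv // addr0.
move=> e [He _] u Hu c Hc; rewrite /ct_act Hu //; exact: lin0.
Qed.

Lemma sm_Mi i : submod (0 : M i) +%R isE (fun e m => e i m) (fun m => m = 0).
Proof.
split; first by [].
split; first by move=> u v -> ->; rewrite addr0.
by move=> e [He _] u ->; exact: lin0.
Qed.
Lemma sm_MiT i : submod (0 : M i) +%R isE (fun e m => e i m) (fun _ => True).
Proof. by []. Qed.

Lemma CT_length (D : C -> nat) : (forall c, Dim_length mM (tau c) (D c)) ->
  has_length ct_zero ct_add isE ct_act (fun w => w = ct_zero) (fun _ => True)
     (\sum_c D c).
Proof.
move=> HD.
have step : forall r, uniq r ->
  has_length ct_zero ct_add isE ct_act (Ns [::]) (Ns r) (\sum_(c <- r) D c).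
  elim=> [|c r IH] /=.
    by move=> _; rewrite big_nil; apply: HL0; exact: sm_Ns.
  move=> /andP[cr ur]; rewrite big_cons addnC.
  apply: HL_cat (IH ur) _.
  suff Ht : has_length ct_zero ct_add isE ct_act (Ns r) (Ns (c :: r)) (D c) <->
    has_length (0 : M (tau c)) +%R isE (fun e m => e (tau c) m) (fun m => m = 0) (fun _ => True) (D c).
    by apply/Ht; apply: HD.
  apply: (HL_transfer grp_CT (phi := fun w => w c)) => //.
  - exact: sm_Ns.
  - exact: sm_Ns.
  - move=> w Hw c' Hc'; apply: Hw; move: Hc'; rewrite inE negb_or => /andP[].
    by [].
  - exact: sm_Mi.
  - move=> w' _; exists (single (c0:=c) w'); last exact: single_id.
    move=> c' Hc'; apply: single_ne; move: Hc'; rewrite inE negb_or => /andP[H _].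
    by rewrite eq_sym.
  - move=> w Hw H0 c' Hc'.
    have [<-|ne] := eqVneq c c'; first exact: H0.
    by apply: Hw; rewrite inE negb_or eq_sym ne.
  - by move=> w Hw; apply: Hw.
have := step _ (enum_uniq C).
have E1 : Ns [::] = (fun w => w = ct_zero).
  apply: functional_extensionality => w; apply: propositional_extensionality.
  split; last by move=> -> c.
  by move=> Hw; apply: functional_extensionality_dep => c; apply: Hw.
have E2 : Ns (enum C) = (fun _ => True).
  apply: functional_extensionality => w; apply: propositional_extensionality.
  by split => // _ c; rewrite mem_enum.
by rewrite E1 E2 big_enum.
Qed.
End CT.

End Conc.


Section Conc2.
Variables (k : fieldType) (V A : finType) (s t : A -> V) (M : V -> lmodType k)
  (mM : forall a : A, {linear M (s a) -> M (t a)}).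
Local Notation isE := (is_endo mM).

Section HT.
Variables (X : finType) (n : X -> nat) (sg : X -> V).
Definition HT := forall x, 'rV[k]_(n x) -> M (sg x).
Definition ht_zero : HT := fun x v => 0.
Definition ht_add (f g : HT) : HT := fun x v => f x v + g x v.
Definition ht_opp (f : HT) : HT := fun x v => - f x v.
Definition ht_act (e : endoT M) (f : HT) : HT := fun x v => e (sg x) (f x v).
Definition HTlin (f : HT) := forall x, lin (f x).

Lemma HT_ext (f g : HT) : (forall x v, f x v = g x v) -> f = g.
Proof.
move=> H; apply: functional_extensionality_dep => x.
by apply: functional_extensionality => v.
Qed.

Lemma grp_HT : grp ht_zero ht_add ht_opp isE ht_act.
Proof.
split.
- by move=> u v w; apply: HT_ext => x y; rewrite /ht_add addrA.
- by move=> u v; apply: HT_ext => x y; rewrite /ht_add addrC.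
- by move=> u; apply: HT_ext => x y; rewrite /ht_add /ht_zero add0r.
- by move=> u; apply: HT_ext => x y; rewrite /ht_add /ht_opp subrr.
- move=> e [He _] u v; apply: HT_ext => x y.
  by rewrite /ht_act /ht_add lin_add.
- by exists (fun i (m : M i) => - m); first exact: endo_neg.
Qed.

Lemma sm_HT0 : submod ht_zero ht_add isE ht_act (fun f => f = ht_zero).
Proof.
split; first by [].
split; first by move=> u v -> ->; apply: HT_ext => x y; rewrite /ht_add addr0.
move=> e [He _] u ->; apply: HT_ext => x y; exact: lin0.
Qed.

Lemma sm_HTlin : submod ht_zero ht_add isE ht_act HTlin.
Proof.
split; first by move=> x; apply: lin_zero.
split; first by move=> u v Hu Hv x; apply: lin_addf.
by move=> e [He _] u Hu x; apply: lin_comp.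
Qed.

Definition CX := {x : X & 'I_(n x)}.
Definition tauX (c : CX) := sg (tag c).
Definition phiH (f : HT) : CT M tauX := fun c => f (tag c) (delta_mx 0 (tagged c)).

Lemma lin_row_expand (U : lmodType k) m (f : 'rV[k]_m -> U) (v : 'rV[k]_m) : lin f ->
  f v = \sum_(j < m) v 0 j *: f (delta_mx 0 j).
Proof.
move=> Hf; rewrite {1}(row_sum_delta v) (lin_sum Hf).
by apply: eq_bigr => j _; rewrite (lin_scale Hf).
Qed.

Lemma HT_length (D : X -> nat) : (forall x, Dim_length mM (sg x) (D x)) ->
  has_length ht_zero ht_add isE ht_act (fun f => f = ht_zero) HTlin
     (\sum_x (n x * D x)%N).
Proof.
move=> HD.
have HC := CT_length (tau := tauX) (D := fun c => D (tag c)) (fun c => HD (tag c)).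
have -> : (\sum_x (n x * D x))%N = (\sum_(c : CX) D (tag c))%N.
  transitivity (\sum_x \sum_(j : 'I_(n x)) D x)%N.
    by apply: eq_bigr => x _; rewrite sum_nat_const card_ord.
  exact: (@sig_big_dep _ _ _ X (fun x => 'I_(n x)) xpredT (fun _ _ => true) (fun x _ => D x)).
suff Ht : has_length ht_zero ht_add isE ht_act (fun f => f = ht_zero) HTlin (\sum_(c : CX) D (tag c))
   <-> has_length (ct_zero M tauX) (ct_add (tau:=tauX)) isE (ct_act (tau:=tauX)) (fun w => w = ct_zero M tauX) (fun _ => True) (\sum_(c : CX) D (tag c)).
  by apply/Ht.
apply: (HL_transfer grp_HT (phi := phiH)) => //.
- exact: sm_HT0.
- exact: sm_HTlin.
- by move=> f ->; move=> x; apply: lin_zero.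
- split; first by [].
  split; first by move=> u v -> ->; apply: functional_extensionality_dep => c; rewrite /ct_add addr0.
  move=> e [He _] u ->; apply: functional_extensionality_dep => c; exact: lin0.
- move=> g _.
  pose f : HT := fun x v => \sum_(j < n x) v 0 j *: (g (Tagged (fun x => 'I_(n x)) j) : M (sg x)).
  exists f.
    move=> x c u v; rewrite /f scaler_sumr -big_split /=; apply: eq_bigr => j _.
    by rewrite !mxE scalerDl scalerA.
  apply: functional_extensionality_dep => -[x j]; rewrite /phiH /f /=.
  rewrite (bigD1 j) //= big1 ?addr0.
    by rewrite mxE /= !eqxx scale1r.
  by move=> j' ne; rewrite mxE /= (negbTE ne) scale0r.
- move=> f Hf H0; apply: HT_ext => x v; rewrite /ht_zero (lin_row_expand _ (Hf x)).
  apply: big1 => j _.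
  have := congr1 (fun w => w (Tagged (fun x => 'I_(n x)) j)) H0.
  by rewrite /phiH /= => ->; rewrite scaler0.
- by move=> f ->.
Qed.
End HT.

End Conc2.


Section Main.
Variables (k : fieldType) (V A : finType) (s t : A -> V) (M : V -> lmodType k)
  (mM : forall a : A, {linear M (s a) -> M (t a)}).
Local Notation isE := (is_endo mM).

Lemma dim_exists : endofinite mM -> forall i, exists n, Dim_length mM i n.
Proof.
case=> n0 H0 i.
have H0' : has_length (ct_zero M (fun j : V => j)) (@ct_add k V M V (fun j => j)) isE
   (@ct_act k V M V (fun j => j)) (fun w => w = ct_zero M (fun j : V => j)) (fun _ => True) n0 := H0.
pose Ki := fun w : CT M (fun j : V => j) => w i = 0.
have sKi : submod (ct_zero M (fun j : V => j)) (@ct_add k V M V (fun j => j)) isE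
   (@ct_act k V M V (fun j => j)) Ki.
  split; first by [].
  split; first by move=> u v; rewrite /Ki /ct_add => -> ->; rewrite addr0.
  by move=> e [He _] u; rewrite /Ki /ct_act => ->; apply: lin0.
have [m Hm] := HL_upper (grp_CT mM (fun j => j)) H0' sKi (fun w (Hw : w = _) => ltac:(by rewrite Hw)) (fun w _ => I).
exists m.
suff Ht : has_length (ct_zero M (fun j : V => j)) (@ct_add k V M V (fun j => j)) isE
   (@ct_act k V M V (fun j => j)) Ki (fun _ => True) m <-> Dim_length mM i m.
  by apply/Ht.
apply: (HL_transfer (grp_CT mM (fun j => j)) (phi := fun w => w i)) => //.
- split; first by [].
  split; first by move=> u v -> ->; rewrite addr0.
  by move=> e [He _] u ->; apply: lin0.
- move=> w' _; exists (single (c0:=i) w') => //.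
  exact: single_id.
Qed.

Variables (d : V -> nat) (xA : forall a : A, 'M[k]_(d (s a), d (t a))).

Local Notation hz := (@ht_zero k V M V d (fun i => i)).
Local Notation hadd := (@ht_add k V M V d (fun i => i)).
Local Notation hact := (@ht_act k V M V d (fun i => i)).
Local Notation az := (@ht_zero k V M A (fun a => d (s a)) t).
Local Notation aadd := (@ht_add k V M A (fun a => d (s a)) t).
Local Notation aact := (@ht_act k V M A (fun a => d (s a)) t).
Local Notation Ker := (is_hom mM xA).
Local Notation hlin := (@HTlin _ _ M V d (fun i => i)).
Local Notation alin := (@HTlin _ _ M A (fun a => d (s a)) t).
Local Notation Im := (im_delta mM xA).
Local Notation dl := (delta mM xA).

Lemma lin_mulx m n (B : 'M[k]_(m, n)) : lin (fun v : 'rV[k]_m => v *m B).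
Proof. by move=> c u v; rewrite mulmxDl scalemxAl. Qed.

Lemma sm_Ker : submod hz hadd isE hact Ker.
Proof.
split.
  split; first by move=> i; apply: lin_zero.
  by move=> a v; rewrite /ht_zero linear0.
split.
  move=> f g [Hf1 Hf2] [Hg1 Hg2]; split; first by move=> i; apply: lin_addf.
  by move=> a v; rewrite /ht_add linearD Hf2 Hg2.
move=> e [He1 He2] f [Hf1 Hf2]; split; first by move=> i; apply: lin_comp.
by move=> a v; rewrite /ht_act He2 Hf2.
Qed.

Lemma dl0 : dl hz = az.
Proof. by apply: (@HT_ext _ _ _ A (fun a => d (s a)) t) => a v; rewrite /delta /ht_zero linear0 subr0. Qed.
Lemma dlD f g : dl (hadd f g) = aadd (dl f) (dl g).
Proof.
apply: (@HT_ext _ _ _ A (fun a => d (s a)) t) => a v; rewrite /delta /ht_add linearD opprD.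
by rewrite -!addrA; congr (_ + _); rewrite addrCA.
Qed.
Lemma dlE e f : isE e -> dl (hact e f) = aact e (dl f).
Proof.
move=> [He1 He2]; apply: (@HT_ext _ _ _ A (fun a => d (s a)) t) => a v; rewrite /delta /ht_act He2.
by rewrite (lin_sub (He1 (t a))).
Qed.

Lemma dl_lin (f : HT M d (fun i => i)) : HTlin f -> HTlin (n:=fun a => d (s a)) (sg:=t) (dl f).
Proof.
move=> Hf a; rewrite /delta.
apply: lin_addf; first exact: lin_comp (Hf (s a)) (lin_linear (mM a)).
apply: lin_oppf; exact: lin_comp (lin_mulx _) (Hf (t a)).
Qed.

Lemma sm_Im : submod az aadd isE aact Im.
Proof.
split; first by exists hz; split; [move=> i; apply: lin_zero|rewrite dl0].
split.
  move=> _ _ [f [Hf ->]] [g [Hg ->]]; exists (hadd f g); split; last by rewrite dlD.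
  by move=> i; apply: lin_addf.
move=> e He _ [f [Hf ->]]; exists (hact e f); split; last by rewrite dlE.
by case: He => He1 _ i; apply: lin_comp.
Qed.

Lemma core (D : V -> nat) : (forall i, Dim_length mM i (D i)) ->
  exists x1 x2 y,
  [/\ has_length hz hadd isE hact (fun f => f = hz) Ker x1,
      has_length az aadd isE aact Im alin y,
      (\sum_i (d i * D i) = x1 + x2)%N &
      (\sum_a (d (s a) * D (t a)) = x2 + y)%N].
Proof.
move=> HD.
have GH := grp_HT mM d (fun i => i).
have GA := grp_HT mM (fun a => d (s a)) t.
have HP := HT_length (mM := mM) d (sg := fun i => i) HD.
have HQ := HT_length (mM := mM) (fun a => d (s a)) (sg := t) (fun a => HD (t a)).
have KP : sub_set Ker hlin by move=> f [].
have ZK : sub_set (fun f => f = hz) Ker by move=> f ->; case: sm_Ker.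
have [x1 Hx1] := HL_lower GH HP sm_Ker ZK KP.
have [x2 Hx2] := HL_upper GH HP sm_Ker ZK KP.
have E1 := JH GH HP (HL_cat Hx1 Hx2).
have Hx2' : has_length az aadd isE aact (fun g => g = az) Im x2.
  suff Ht : has_length hz hadd isE hact Ker hlin x2 <->
            has_length az aadd isE aact (fun g => g = az) Im x2 by apply/Ht.
  apply: (HL_transfer GH (phi := dl)) => //.
  - exact: dl0.
  - exact: dlD.
  - by move=> e He w; apply: dlE.
  - exact: sm_Ker.
  - exact: (sm_HTlin mM).
  - exact: (sm_HT0 mM).
  - exact: sm_Im.
  - by move=> g ->; exists hz; split; [move=> i; apply: lin_zero|rewrite dl0].
  - by move=> f Hf; exists f.
  - by move=> g [f [Hf ->]]; exists f.
  - move=> f Hf H0; split => // a v.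
    have := congr1 (fun g => g a v) H0; rewrite /delta /ht_zero /= => /eqP.
    by rewrite subr_eq0 => /eqP.
  - move=> f [Hf1 Hf2]; apply: (@HT_ext _ _ _ A (fun a => d (s a)) t) => a v.
    by rewrite /delta Hf2 subrr.
have IQ : sub_set Im alin by move=> g [f [Hf ->]]; apply: dl_lin.
have ZI : sub_set (fun g => g = az) Im.
  by move=> g ->; exists hz; split; [move=> i; apply: lin_zero|rewrite dl0].
have [y Hy] := HL_upper GA HQ sm_Im ZI IQ.
have E2 := JH GA HQ (HL_cat Hx2' Hy).
by exists x1, x2, y; split.
Qed.

End Main.

Lemma lemma7_proof (k : fieldType) (V A : finType) (s t : A -> V)
  (Hconn : quiver_connected s t) (Hacyc : quiver_acyclic s t)
  (d : V -> nat) (xA : forall a : A, 'M[k]_(d (s a), d (t a)))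
  (M : V -> lmodType k) (mM : forall a : A, {linear M (s a) -> M (t a)})
  (Hendo : endofinite mM) :
  [/\ (forall i : V, exists n, Dim_length mM i n),
      (exists h, hom_length mM xA h),
      (exists e, ext_length mM xA e) &
      forall (D : V -> nat) (h e : nat),
        (forall i : V, Dim_length mM i (D i)) ->
        hom_length mM xA h -> ext_length mM xA e ->
        euler s t d D = h%:Z - e%:Z].
Proof.
have Hdim := dim_exists Hendo.
pose D0 i := proj1_sig (constructive_indefinite_description _ (Hdim i)).
have HD0 : forall i, Dim_length mM i (D0 i).
  by move=> i; rewrite /D0; case: constructive_indefinite_description.
have [x1 [x2 [y [Hx1 Hy _ _]]]] := core xA HD0.
split => //; first by exists x1.
  by exists y.
move=> D h e HD Hh He.
have [z1 [z2 [w [Hz1 Hw E1 E2]]]] := core xA HD.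
have GH := grp_HT mM d (fun i => i).
have GA := grp_HT mM (fun a => d (s a)) t.
have Eh : h = z1 := JH GH Hh Hz1.
have Ee : e = w := JH GA He Hw.
have HS : forall (I : finType) (F : I -> nat), \sum_i (F i)%:Z = (\sum_i F i)%N%:Z.
  by move=> I F; rewrite (big_morph Posz PoszD (erefl _)).
rewrite /euler HS HS E1 E2 Eh Ee !PoszD.
ring.
Qed.


Theorem lemma7 (k : fieldType) (V A : finType) (s t : A -> V)
  (Hconn : quiver_connected s t) (Hacyc : quiver_acyclic s t)
  (d : V -> nat) (xA : forall a : A, 'M[k]_(d (s a), d (t a)))
  (M : V -> lmodType k) (mM : forall a : A, {linear M (s a) -> M (t a)})
  (Hendo : endofinite mM) :
  [/\ (forall i : V, exists n, Dim_length mM i n),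
      (exists h, hom_length mM xA h),
      (exists e, ext_length mM xA e) &
      forall (D : V -> nat) (h e : nat),
        (forall i : V, Dim_length mM i (D i)) ->
        hom_length mM xA h -> ext_length mM xA e ->
        euler s t d D = h%:Z - e%:Z].
Proof. exact: lemma7_proof. Qed.
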